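(* Let $\Phi,\Psi\in\mathcal{S}_+^m(\mathbb{T})$ and let $T$ be a measurable $\mathbb{C}^{m\times m}$-valued function on $\mathbb{T}$ such that $T$ and $T^{-1}$ are essentially bounded on $\mathbb{T}$. Then for every $\tau\in\mathbb{R}$, $$\mathcal{S}_T^{(\tau)}(\Phi\|\Psi)=\mathcal{S}_T^{(\tau)}(T^*\Phi T\,\|\,T^*\Psi T).$$
   Context: Integration $\int f$ denotes $\frac{1}{2\pi}\int_{-\pi}^{\pi} f(e^{j\vartheta})\,d\vartheta$. A star denotes conjugate transpose. $\mathcal{S}_+^m(\mathbb{T})$ is the set of measurable, bounded, coercive, Hermitian $\mathbb{C}^{m\times m}$-valued spectral density functions on the unit circle $\mathbb{T}$. For $\Psi\in\mathcal{S}_+^m(\mathbb{T})$, $W_\Psi$ is its canonical left spectral factor (outer, $\det W_\Psi\ne0$ on $\{|z|\ge1\}$, $W_\Psi(\infty)$ lower triangular with positive diagonal, $\Psi=W_\Psi W_\Psi^*$ on $\mathbb{T}$). For $\tau\in\mathbb{R}\setminus\{0,1\}$, $\mathcal{S}_T^{(\tau)}(\Phi\|\Psi):=\int\operatorname{tr}\big[\tfrac{1}{\tau(\tau-1)}(W_\Psi^{-1}\Phi W_\Psi^{-*})^{\tau}-\tfrac{1}{\tau-1}\Phi\Psi^{-1}\big]+\tfrac{m}{\tau}$; for $\tau=0$, $\mathcal{S}_T^{(0)}(\Phi\|\Psi):=\int\operatorname{tr}[\log\Psi-\log\Phi+\Phi\Psi^{-1}]-m$; for $\tau=1$, $\mathcal{S}_T^{(1)}(\Phi\|\Psi):=\int\operatorname{tr}[W_\Psi^{-1}\Phi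 W_\Psi^{-*}\log(W_\Psi^{-1}\Phi W_\Psi^{-*})-\Phi\Psi^{-1}]+m$. *)

(* Defs.v *)
From HB Require Import structures.
From mathcomp Require Import all_boot all_order all_algebra.
From mathcomp Require Import sesquilinear spectral.
From mathcomp Require Import complex.
From mathcomp Require Import all_classical all_reals all_analysis.

Set Implicit Arguments.
Unset Strict Implicit.
Unset Printing Implicit Defensive.

Import Order.TTheory GRing.Theory Num.Theory.
Import numFieldNormedType.Exports.
Local Open Scope classical_set_scope.
Local Open Scope ring_scope.
Local Open Scope complex_scope.

(* A function on the unit circle T is represented by its values on
   theta in [-pi, pi], i.e. F theta stands for F(e^{j theta}). *)

Section Defs.
Context {R : realType}.
Local Notation C := R[i].
Local Notation mu := (@lebesgue_measure R).

Definition Tdom : set R := [set x | - pi <= x <= pi].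

Definition mxstar (m n : nat) (A : 'M[C]_(m, n)) : 'M[C]_(n, m) :=
  (A ^t* )%sesqui.

Definition circ_int (f : R -> R) : \bar R :=
  ((2 * pi)^-1)%:E * (\int[mu]_(x in Tdom) (f x)%:E)%E.

Definition circ_intC (f : R -> C) : C :=
  (fine (circ_int (fun x => complex.Re (f x))))
    +i* (fine (circ_int (fun x => complex.Im (f x)))).

Definition mx_measurable (m n : nat) (F : R -> 'M[C]_(m, n)) : Prop :=
  forall i j, measurable_fun Tdom (fun x => complex.Re (F x i j)) /\
              measurable_fun Tdom (fun x => complex.Im (F x i j)).

Definition ess_bounded (m n : nat) (F : R -> 'M[C]_(m, n)) : Prop :=
  exists M : R, {ae mu, forall x, Tdom x -> forall i j, `|F x i j| <= M%:C}.

Definition spectral_density (m : nat) (Psi : R -> 'M[C]_m) : Prop :=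
  [/\ mx_measurable Psi,
      ess_bounded Psi,
      {ae mu, forall x, Tdom x -> mxstar (Psi x) = Psi x} &
      (exists2 eps : R, 0 < eps &
        {ae mu, forall x, Tdom x -> forall v : 'rV[C]_m,
           eps%:C * (v *m mxstar v) 0 0 <= (v *m Psi x *m mxstar v) 0 0})].

Definition expj (t : R) : C := cos t +i* sin t.

(* n-th Fourier coefficient (coefficient of z^n, z = e^{j theta}) *)
Definition fcoef (m : nat) (F : R -> 'M[C]_m) (n : int) : 'M[C]_m :=
  \matrix_(i, j) circ_intC (fun x => F x i j * expj (- (n%:~R * x))).

(* W is the canonical left spectral factor of Psi (given by its boundary
   values on T): W = sum_{k>=0} W_k z^{-k} is bounded analytic in |z| > 1
   (including infinity), with an inverse W^{-1} that is also bounded analytic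
   there (hence W is outer with det W <> 0 on |z| >= 1),
   W(infinity) = W_0 is lower triangular with positive diagonal, and
   Psi = W W^* on T. *)
Definition canonical_left_factor (m : nat) (Psi W : R -> 'M[C]_m) : Prop :=
  [/\ mx_measurable W /\ ess_bounded W,
      {ae mu, forall x, Tdom x -> W x \in unitmx} /\
      mx_measurable (fun x => invmx (W x)) /\ ess_bounded (fun x => invmx (W x)),
      (forall n : nat, (0 < n)%N ->
          fcoef W n%:Z = 0 /\ fcoef (fun x => invmx (W x)) n%:Z = 0),
      (forall i j : 'I_m, (i < j)%N -> fcoef W 0 i j = 0) /\
      (forall i : 'I_m, 0 < fcoef W 0 i i) &
      {ae mu, forall x, Tdom x -> Psi x = W x *m mxstar (W x)}].

Definition mxfun (m : nat) (f : R -> R) (A : 'M[C]_m) : 'M[C]_m :=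
  invmx (spectralmx A)
    *m diag_mx (\row_i ((f (complex.Re (spectral_diag A 0 i)))%:C))
    *m spectralmx A.

Definition mxpow (m : nat) (tau : R) (A : 'M[C]_m) := mxfun (fun t => t `^ tau) A.
Definition mxlog (m : nat) (A : 'M[C]_m) := mxfun (@ln R) A.
Definition mxxlogx (m : nat) (A : 'M[C]_m) := mxfun (fun t => t * ln t) A.

(* the tau-divergence S_T^{(tau)}(Phi || Psi), where W is the canonical left
   spectral factor W_Psi of Psi.  Integrands are the real parts of the traces
   (these traces are real a.e.). *)
Definition S_T (m : nat) (tau : R) (W Phi Psi : R -> 'M[C]_m) : \bar R :=
  let X x := invmx (W x) *m Phi x *m mxstar (invmx (W x)) in
  let PhiPsiinv x := \tr (Phi x *m invmx (Psi x)) in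
  if tau == 0 then
    (circ_int (fun x => complex.Re
        (\tr (mxlog (Psi x)) - \tr (mxlog (Phi x)) + PhiPsiinv x)%R) - (m%:R)%:E)%E
  else if tau == 1 then
    (circ_int (fun x => complex.Re
        (\tr (mxxlogx (X x)) - PhiPsiinv x)%R) + (m%:R)%:E)%E
  else
    (circ_int (fun x => complex.Re
        ((tau * (tau - 1))^-1%:C * \tr (mxpow tau (X x))
          - (tau - 1)^-1%:C * PhiPsiinv x)%R) + (m%:R / tau)%R%:E)%E.

End Defs.

(* Main.v *)
Require Import Defs.
From HB Require Import structures.
From mathcomp Require Import all_boot all_order all_algebra.
From mathcomp Require Import sesquilinear spectral.
From mathcomp Require Import complex.
From mathcomp Require Import all_classical all_reals all_analysis.

Import Order.TTheory GRing.Theory Num.Theory.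
Local Open Scope classical_set_scope.
Local Open Scope ring_scope.
Section Meas.
Context {R : realType}.
Local Notation mu := (@lebesgue_measure R).
Import HBNNSimple.

Lemma nn_ae_le (F G : R -> \bar R) : (forall x, 0 <= F x)%E -> (forall x, 0 <= G x)%E ->
  {ae mu, forall x, F x = G x} -> (\int[mu]_x F x <= \int[mu]_x G x)%E.
Proof.
move=> F0 G0 [N [mN N0 sN]].
rewrite !ge0_integralTE //.
apply: ge_ereal_sup => _ [h /= hF <-].
have mCN : measurable (~` N) by exact: measurableC.
apply: ereal_sup_ubound => /=.
exists (proj_nnsfun h mCN).
  move=> x /=; rewrite /measurable_realfun.mindic indicE.
  case: (pselect (N x)) => Nx.
    rewrite (_ : x \in ~` N = false); last by apply/negbTE; rewrite notin_setE.
    by rewrite mulr0 G0.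
  rewrite (_ : x \in ~` N = true); last by apply/mem_set.
  rewrite mulr1.
  have -> : G x = F x.
    apply/esym; apply: contrapT => hx; apply: Nx; apply: sN; exact: hx.
  exact: hF.
have E1 := integral_nnsfun mu measurableT h.
have E2 := integral_nnsfun mu measurableT (proj_nnsfun h mCN).
rewrite !patch_setT in E1 E2; rewrite -E1 -E2.
apply: ae_eq_integral => //.
- apply/measurable_realfun.measurable_EFinP; by [].
- apply/measurable_realfun.measurable_EFinP; by [].
- exists N; split => // x /= hx; apply: contrapT => Nx; apply: hx => _.
  by rewrite /measurable_realfun.mindic indicE (_ : x \in ~` N = true) ?mulr1 //; exact/mem_set.
Qed.

Lemma aeS (P Q : R -> Prop) : (forall x, P x -> Q x) ->
  {ae mu, forall x, P x} -> {ae mu, forall x, Q x}.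
Proof.
move=> PQ [N [mN N0 sN]]; exists N; split => // x /= nQ; apply: sN => /= /PQ.
exact: nQ.
Qed.

Lemma aeI (P Q : R -> Prop) :
  {ae mu, forall x, P x} -> {ae mu, forall x, Q x} -> {ae mu, forall x, P x /\ Q x}.
Proof.
move=> [N [mN N0 sN]] [M [mM M0 sM]]; exists (N `|` M); split.
- exact: measurableU.
- apply/eqP; rewrite -measure_le0 -[leRHS]adde0 -{1}N0 -M0.
  exact: measureU2.
- move=> x /= nPQ; case: (pselect (P x)) => Px; last by left; apply: sN.
  by right; apply: sM => Qx; apply: nPQ.
Qed.

Lemma nn_ae_eq (F G : R -> \bar R) : (forall x, 0 <= F x)%E -> (forall x, 0 <= G x)%E ->
  {ae mu, forall x, F x = G x} -> (\int[mu]_x F x = \int[mu]_x G x)%E.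
Proof.
move=> F0 G0 H; apply/le_anti/andP; split; apply: nn_ae_le => //.
by apply: aeS H => x ->.
Qed.

Lemma int_ae_eq (D : set R) (F G : R -> \bar R) :
  {ae mu, forall x, D x -> F x = G x} ->
  (\int[mu]_(x in D) F x = \int[mu]_(x in D) G x)%E.
Proof.
move=> H; rewrite integral_mkcond [RHS]integral_mkcond.
rewrite integralE [RHS]integralE; congr (_ - _)%E; apply: nn_ae_eq => //.
- by apply: aeS H => x Hx; rewrite !funeposE !patchE; case: ifPn => // /set_mem /Hx ->.
- by apply: aeS H => x Hx; rewrite !funenegE !patchE; case: ifPn => // /set_mem /Hx ->.
Qed.

Lemma circ_int_ae (f g : R -> R) : {ae mu, forall x, Tdom x -> f x = g x} ->
  circ_int f = circ_int g.
Proof.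
move=> H; rewrite /circ_int; congr (_ * _)%E; apply: int_ae_eq.
by apply: aeS H => x Hx /Hx ->.
Qed.
End Meas.
Arguments aeI {R P Q}.
Arguments aeS {R P Q}.
Set Implicit Arguments.
Unset Strict Implicit.
Local Open Scope complex_scope.
Section LA.
Context {R : realType}.
Local Notation C := R[i].

Lemma starK m n (A : 'M[C]_(m, n)) : mxstar (mxstar A) = A.
Proof. exact: trmxCK. Qed.

Lemma star_mul m n p (A : 'M[C]_(m, n)) (B : 'M[C]_(n, p)) :
  mxstar (A *m B) = mxstar B *m mxstar A.
Proof. by rewrite /mxstar trmx_mul map_mxM. Qed.

Lemma star_inv n (A : 'M[C]_n) : mxstar (invmx A) = invmx (mxstar A).
Proof. by rewrite /mxstar trmx_inv map_invmx. Qed.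

Lemma star_unit n (A : 'M[C]_n) : (mxstar A \in unitmx) = (A \in unitmx).
Proof. by rewrite /mxstar map_unitmx unitmx_tr. Qed.

Lemma invmxM n (A B : 'M[C]_n) : A \in unitmx -> B \in unitmx ->
  invmx (A *m B) = invmx B *m invmx A.
Proof.
move=> uA uB; have uAB : A *m B \in unitmx by rewrite unitmx_mul uA.
rewrite -[RHS]mulmx1 -(mulmxV uAB) !mulmxA.
by rewrite -[invmx B *m invmx A *m A]mulmxA mulVmx // mulmx1 mulVmx // mul1mx.
Qed.

Lemma herm_normal n (A : 'M[C]_n) : mxstar A = A -> A \is normalmx.
Proof. by move=> h; apply/normalmxP; rewrite -/(mxstar A) h. Qed.

Lemma char_poly_sim n (S A : 'M[C]_n) : S \in unitmx ->
  char_poly (S *m A *m invmx S) = char_poly A.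
Proof.
move=> uS; rewrite /char_poly.
have -> : char_poly_mx (S *m A *m invmx S) =
   map_mx polyC S *m char_poly_mx A *m map_mx polyC (invmx S).
  have hX : map_mx polyC S *m 'X%:M *m map_mx polyC (invmx S) = 'X%:M.
    by rewrite scalar_mxC -mulmxA -map_mxM mulmxV // map_mx1 mulmx1.
  by rewrite /char_poly_mx mulmxBr mulmxBl -!map_mxM hX.
rewrite !det_mulmx !det_map_mx mulrC mulrA -rmorphM -det_mulmx mulVmx //.
by rewrite det1 rmorph1 mul1r.
Qed.

Definition ev n (A : 'M[C]_n) := spectral_diag A.

Lemma normal_decomp n (A : 'M[C]_n) : A \is normalmx ->
  A = invmx (spectralmx A) *m diag_mx (ev A) *m spectralmx A.
Proof. by move/orthomx_spectralP. Qed.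

Lemma tr_mxfun n (f : R -> R) (A : 'M[C]_n) :
  \tr (mxfun f A) = \sum_i (f (complex.Re (ev A 0 i)))%:C.
Proof.
rewrite /mxfun mxtrace_mulC mulmxA mulmxV ?spectral_unit // mul1mx mxtrace_diag.
by apply: eq_bigr => i _; rewrite mxE.
Qed.

Lemma char_normal n (A : 'M[C]_n) : A \is normalmx ->
  char_poly A = \prod_i ('X - (ev A 0 i)%:P).
Proof.
move=> /normal_decomp hA; rewrite {1}hA.
rewrite -{2}(invmxK (spectralmx A)) char_poly_sim ?unitmx_inv ?spectral_unit //.
rewrite char_poly_trig ?diag_mx_is_trig //.
by apply: eq_bigr => i _; rewrite mxE eqxx mulr1n.
Qed.

Lemma sum_ev_eq n (A B : 'M[C]_n) (g : C -> C) : A \is normalmx -> B \is normalmx ->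
  char_poly A = char_poly B -> \sum_i g (ev A 0 i) = \sum_i g (ev B 0 i).
Proof.
move=> nA nB hAB.
have hp : perm_eq [seq ev A 0 i | i <- enum 'I_n] [seq ev B 0 i | i <- enum 'I_n].
  apply: prod_XsubC_eq. rewrite (big_map (fun i : 'I_n => ev A 0 i)) (big_map (fun i : 'I_n => ev B 0 i)) !big_enum /=.
  change (\prod_i ('X - (ev A 0 i)%:P) = \prod_i ('X - (ev B 0 i)%:P)).
  by rewrite -char_normal // -char_normal.
have := perm_big _ hp (op := +%R) (x := 0) (P := xpredT) (F := g).
rewrite (big_map (fun i : 'I_n => ev A 0 i)) (big_map (fun i : 'I_n => ev B 0 i)) !big_enum /=.
by [].
Qed.

Lemma tr_mxfun_eq n (f : R -> R) (A B : 'M[C]_n) : A \is normalmx -> B \is normalmx ->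
  char_poly A = char_poly B -> \tr (mxfun f A) = \tr (mxfun f B).
Proof.
move=> nA nB hAB; rewrite !tr_mxfun.
exact: (sum_ev_eq (fun z => (f (complex.Re z))%:C)).
Qed.


Definition posdef n (A : 'M[C]_n) :=
  forall v : 'rV[C]_n, v != 0 -> 0 < (v *m A *m mxstar v) 0 0.

Lemma vstar_entry n (v : 'rV[C]_n) :
  (v *m mxstar v) 0 0 = \sum_j v 0 j * Num.conj (v 0 j).
Proof. by rewrite mxE; apply: eq_bigr => j _; rewrite !mxE. Qed.

Lemma vstar_gt0 n (v : 'rV[C]_n) : v != 0 -> 0 < (v *m mxstar v) 0 0.
Proof.
move=> vn0; rewrite vstar_entry.
have [j vj] : exists j, v 0 j != 0.
  apply/not_existsP => hall; move/eqP: vn0; apply; apply/matrixP => i j.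
  rewrite ord1 mxE; apply/eqP; apply: contrapT => h; apply: (hall j); exact/negP.
rewrite (bigD1 j) //=; apply: ltr_wpDr; last by rewrite mul_conjC_gt0.
by apply: sumr_ge0 => k _; exact: mul_conjC_ge0.
Qed.

Lemma coercive_posdef n (A : 'M[C]_n) (eps : R) : 0 < eps ->
  (forall v : 'rV[C]_n, eps%:C * (v *m mxstar v) 0 0 <= (v *m A *m mxstar v) 0 0) ->
  posdef A.
Proof.
move=> e0 h v vn0; apply: lt_le_trans (h v).
by apply: mulr_gt0; [rewrite ltcR | exact: vstar_gt0].
Qed.

Lemma posdef_conj n (A S : 'M[C]_n) : S \in unitmx -> posdef A ->
  posdef (mxstar S *m A *m S).
Proof.
move=> uS pA v vn0.
have -> : v *m (mxstar S *m A *m S) *m mxstar v =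
   (v *m mxstar S) *m A *m mxstar (v *m mxstar S).
  by rewrite star_mul starK !mulmxA.
apply: pA; apply: contra vn0 => /eqP h.
have -> : v = v *m mxstar S *m invmx (mxstar S) by rewrite mulmxK // star_unit.
by rewrite h mul0mx.
Qed.

Lemma ev_pos n (A : 'M[C]_n) : A \is normalmx -> posdef A -> forall i, 0 < ev A 0 i.
Proof.
move=> nA pA i.
set P := spectralmx A.
have uP : P \in unitmx := spectral_unit A.
have PP : P *m mxstar P = 1%:M by apply/unitarymxP; exact: spectral_unitarymx.
have hPA : P *m A = diag_mx (ev A) *m P.
  by rewrite {1}(normal_decomp nA) -/P !mulmxA mulmxV // mul1mx.
set v := row i P.
have vA : v *m A = ev A 0 i *: v.
  rewrite /v -row_mul hPA mul_diag_mx; apply/matrixP => a b.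
  by rewrite !mxE.
have vv : (v *m mxstar v) 0 0 = 1.
  rewrite vstar_entry.
  have : (P *m mxstar P) i i = 1 by rewrite PP mxE eqxx.
  by rewrite mxE => <-; apply: eq_bigr => j _; rewrite !mxE.
have vn0 : v != 0.
  by apply/eqP => h0; move: vv; rewrite h0 mul0mx mxE => /eqP; rewrite eq_sym oner_eq0.
have := pA v vn0; rewrite vA -scalemxAl mxE vv mulr1 => //.
Qed.

Lemma Re_mul_real (x y : C) : complex.Im x = 0 ->
  complex.Re (x * y) = complex.Re x * complex.Re y.
Proof. by case: x y => a b [c d] /= ->; rewrite mul0r subr0. Qed.

Lemma pos_real (x : C) : 0 < x -> x = (complex.Re x)%:C /\ 0 < complex.Re x.
Proof.
case: x => a b; rewrite ltcE /= => /andP[/eqP -> hR]; split => //.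
Qed.

Lemma det_normal n (A : 'M[C]_n) : A \is normalmx ->
  \det A = \prod_i ev A 0 i.
Proof.
move=> /normal_decomp hA; rewrite {1}hA !det_mulmx det_diag mulrC mulrA.
by rewrite -det_mulmx mulmxV ?spectral_unit // det1 mul1r.
Qed.

Lemma tr_mxlog_pos n (A : 'M[C]_n) : A \is normalmx -> posdef A ->
  complex.Re (\tr (mxlog A)) = ln (complex.Re (\det A)) /\ 0 < complex.Re (\det A).
Proof.
move=> nA pA; rewrite /mxlog tr_mxfun det_normal //.
have hp := ev_pos nA pA.
elim/big_rec2: _ => [|j x y _ [hx hy]].
  by rewrite /= ln1.
have [ej pj] := pos_real (hp j).
rewrite /= Re_mul_real; last by rewrite ej.
split; last by rewrite mulr_gt0.
rewrite lnM ?posrE // -hx.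
by rewrite raddfD /=.
Qed.


Lemma herm_conj n (S A : 'M[C]_n) : mxstar A = A ->
  mxstar (S *m A *m mxstar S) = S *m A *m mxstar S.
Proof. by move=> hA; rewrite !star_mul starK hA mulmxA. Qed.

Lemma sim_factor n (Ph Ps W : 'M[C]_n) : W \in unitmx -> Ps = W *m mxstar W ->
  char_poly (invmx W *m Ph *m mxstar (invmx W)) = char_poly (Ph *m invmx Ps).
Proof.
move=> uW eP.
have -> : invmx W *m Ph *m mxstar (invmx W) =
   invmx W *m (Ph *m invmx Ps) *m invmx (invmx W).
  rewrite invmxK eP invmxM ?star_unit // -star_inv !mulmxA.
  by rewrite -[_ *m invmx W *m W]mulmxA mulVmx // mulmx1.
by rewrite char_poly_sim // unitmx_inv.
Qed.

Lemma pointwise n (Ph Ps T W1 W2 : 'M[C]_n) :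
 mxstar Ph = Ph -> mxstar Ps = Ps -> T \in unitmx -> W1 \in unitmx -> W2 \in unitmx ->
 Ps = W1 *m mxstar W1 -> mxstar T *m Ps *m T = W2 *m mxstar W2 ->
 [/\ forall f, \tr (mxfun f (invmx W1 *m Ph *m mxstar (invmx W1))) =
               \tr (mxfun f (invmx W2 *m (mxstar T *m Ph *m T) *m mxstar (invmx W2))),
     \tr (Ph *m invmx Ps) = \tr (mxstar T *m Ph *m T *m invmx (mxstar T *m Ps *m T)) &
     posdef Ph -> posdef Ps ->
     complex.Re (\tr (mxlog Ps)) - complex.Re (\tr (mxlog Ph)) =
     complex.Re (\tr (mxlog (mxstar T *m Ps *m T))) -
     complex.Re (\tr (mxlog (mxstar T *m Ph *m T)))].
Proof.
move=> hPh hPs uT uW1 uW2 eP1 eP2.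
have uPs : Ps \in unitmx by rewrite eP1 unitmx_mul uW1 star_unit uW1.
have usT : mxstar T \in unitmx by rewrite star_unit.
have hT : T = mxstar (mxstar T) by rewrite starK.
have hPh' : mxstar (mxstar T *m Ph *m T) = mxstar T *m Ph *m T.
  by rewrite {2 4}hT herm_conj.
have hPs' : mxstar (mxstar T *m Ps *m T) = mxstar T *m Ps *m T.
  by rewrite {2 4}hT herm_conj.
have eQ : mxstar T *m Ph *m T *m invmx (mxstar T *m Ps *m T) =
          mxstar T *m (Ph *m invmx Ps) *m invmx (mxstar T).
  rewrite invmxM ?unitmx_mul ?usT // invmxM // !mulmxA.
  by rewrite -[_ *m T *m invmx T]mulmxA mulmxV // mulmx1.
split.
- move=> f; apply: tr_mxfun_eq.
  + by apply: herm_normal; rewrite herm_conj.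
  + by apply: herm_normal; rewrite herm_conj.
  + by rewrite (sim_factor _ uW1 eP1) (sim_factor _ uW2 eP2) eQ char_poly_sim.
- by rewrite eQ [RHS]mxtrace_mulC !mulmxA mulVmx // mul1mx.
- move=> pPh pPs.
  have pPh' := posdef_conj uT pPh.
  have pPs' := posdef_conj uT pPs.
  have [lPs gPs] := tr_mxlog_pos (herm_normal hPs) pPs.
  have [lPh gPh] := tr_mxlog_pos (herm_normal hPh) pPh.
  have [lPs' _] := tr_mxlog_pos (herm_normal hPs') pPs'.
  have [lPh' _] := tr_mxlog_pos (herm_normal hPh') pPh'.
  rewrite lPs lPh lPs' lPh'.
  have dT : \det T != 0 by rewrite -unitfE -unitmxE.
  have hc : 0 < \det (mxstar T) * \det T.
    by rewrite /mxstar det_map_mx det_tr mulrC mul_conjC_gt0.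
  have [ec pc] := pos_real hc.
  have dE (A : 'M[C]_n) : \det (mxstar T *m A *m T) = (\det (mxstar T) * \det T) * \det A.
    by rewrite !det_mulmx mulrAC.
  have imc : complex.Im (\det (mxstar T) * \det T) = 0 by rewrite ec.
  rewrite !dE.
  move: pc imc; move: (\det (mxstar T) * \det T) => c pc imc.
  rewrite !Re_mul_real // !lnM ?posrE //.
  by rewrite opprD addrACA subrr add0r.
Qed.

End LA.

Theorem mainTheorem3 (R : realType) (m : nat) (Phi Psi T : R -> 'M[R[i]]_m) :
  spectral_density Phi -> spectral_density Psi ->
  mx_measurable T -> ess_bounded T ->
  {ae @lebesgue_measure R, forall x, Tdom x -> T x \in unitmx} ->
  ess_bounded (fun x => invmx (T x)) ->
  forall (tau : R) (W1 W2 : R -> 'M[R[i]]_m),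
    canonical_left_factor Psi W1 ->
    canonical_left_factor (fun x => mxstar (T x) *m Psi x *m T x) W2 ->
    S_T tau W1 Phi Psi =
    S_T tau W2 (fun x => mxstar (T x) *m Phi x *m T x)
               (fun x => mxstar (T x) *m Psi x *m T x).
Proof.
move=> [_ _ hPhH [e1 e1p hPhC]] [_ _ hPsH [e2 e2p hPsC]] _ _ uT _ tau W1 W2
  [_ [uW1 _] _ _ eW1] [_ [uW2 _] _ _ eW2].
idtac "intro done".
have H := aeI eW1 eW2.
have {}H := aeI uW2 H.
idtac "2".
have {}H := aeI uW1 H.
have {}H := aeI uT H.
idtac "4".
have {}H := aeI hPsC H.
idtac "5".
have {}H := aeI hPsH H.
have {}H := aeI hPhC H.
have {}H := aeI hPhH H.
idtac "H".
have pd0 := aeI hPhC hPsC.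
idtac "pd0".
have pd : {ae @lebesgue_measure R, forall x, Tdom x -> posdef (Phi x) /\ posdef (Psi x)}.
  apply: aeS pd0 => x [a b] Dx; split.
  - exact: coercive_posdef e1p (a Dx).
  - exact: coercive_posdef e2p (b Dx).
idtac "pd".
have key2 := aeI H pd.
idtac "key2".
have [t0|t0] := eqVneq tau 0.
  rewrite t0 /S_T eqxx.
  idtac "case".
  apply: (congr1 (fun e => (e - (m%:R)%:E)%E)).
  idtac "congr".
  apply: circ_int_ae.
  idtac "cia".
  apply: aeS key2 => x [[a [b [c [d [e [f [g [h i]]]]]]]] P] Dx.
  idtac "aeS".
  have [K1 K2 K3] := pointwise (a Dx) (c Dx) (e Dx) (f Dx) (g Dx) (h Dx) (i Dx).
  have [P1 P2] := P Dx.
  idtac "pw".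
  by rewrite !raddfD !raddfN /= K2 (K3 P1 P2).
rewrite /S_T (negbTE t0).
have [t1|t1] := eqVneq tau 1.
  apply: (congr1 (fun e => (e + (m%:R)%:E)%E)).
  apply: circ_int_ae.
  apply: aeS key2 => x [[a [b [c [d [e [f [g [h i]]]]]]]] P] Dx.
  have [K1 K2 K3] := pointwise (a Dx) (c Dx) (e Dx) (f Dx) (g Dx) (h Dx) (i Dx).
  idtac "pw1".
  by rewrite K1 K2.
apply: (congr1 (fun e => (e + (m%:R / tau)%:E)%E)).
apply: circ_int_ae.
apply: aeS key2 => x [[a [b [c [d [e [f [g [h i]]]]]]]] P] Dx.
have [K1 K2 K3] := pointwise (a Dx) (c Dx) (e Dx) (f Dx) (g Dx) (h Dx) (i Dx).
idtac "pw2".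
by rewrite K1 K2.
Qed.
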